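(* Assume (H1) and (H2) of the standing setting. Let $w\in V$ and $f\in H$. Then for every $\lambda\ge C_{\theta_1,1/4}\|w\|_V^{\theta_1}$ there exists $u\in V$ such that $$\lambda(u,v-u)+a(u,v-u)+\langle B(w,u),v-u\rangle+\varphi(v)-\varphi(u)\ge (f,v-u)\qquad\forall v\in V. \tag{O}$$ In particular, $u\in D(\partial\varphi)$.
   Context: Standing setting. $V\subset H\subset V'$ is a Gelfand triple of real Hilbert spaces ($H$ identified with its dual), with continuous and dense embeddings, and the embedding $V\hookrightarrow H$ is compact. $(\cdot,\cdot)$ denotes the inner product of $H$ and $\langle\cdot,\cdot\rangle$ the duality pairing between $V'$ and $V$. $a:V\times V\to\mathbb R$ is a bounded bilinear form with $a(u,u)\ge\alpha\|u\|^2$ for some $\alpha>0$; the norm of $V$ is taken to be $\|u\|_V:=\sqrt{a(u,u)}$. $B:V\times V\to V'$ is a bilinear operator with $|\langle B(u,v),w\rangle|\le C_B\|u\|_V\|v\|_V\|w\|_V$ for all $u,v,w\in V$. $\varphi:V\to(-\infty,+\infty]$ is convex, proper and lower semicontinuous, $D(\varphi)=\{v:\varphi(v)<\infty\}$, and $\varphi(v)\ge-C_{\varphi1}(\|v\|_V+1)$ for all $v$ for some constant $C_{\varphi1}>0$; $\partial\varphi(u)=\{\xi\in V':\langle\xi,v-u\rangle\le\varphi(v)-\varphi(u)\ \forall v\in V\}$, $D(\partial\varphi)=\{u:\partial\varphi(u)\ne\emptyset\}$. (H1) There are $C>0$, $\beta_1\in(0,1]$ with $|\langle B(u,v),v\rangle|\le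 C\|u\|_V\|v\|_V\|v\|_H^{\beta_1}\|v\|_V^{1-\beta_1}$ for all $u,v\in V$. Set $\theta_1:=2/\beta_1$; by Young's inequality, for every $\epsilon>0$ there is a constant $C_{\theta_1,\epsilon}>0$ (fixed once and for all) with $|\langle B(u,v),v\rangle|\le C_{\theta_1,\epsilon}\|u\|_V^{\theta_1}\|v\|_H^2+\epsilon\|v\|_V^2$ for all $u,v\in V$. (H2) For each fixed $u\in V$: if $v_j\rightharpoonup v$ and $w_j\rightharpoonup w$ weakly in $V$, then $\langle B(u,v_j),w_j\rangle\to\langle B(u,v),w\rangle$. *)

(* Defs.v *)
From HB Require Import structures.
From mathcomp Require Import all_boot all_order all_algebra.
From mathcomp Require Import all_classical all_reals all_analysis.
Set Implicit Arguments. Unset Strict Implicit. Unset Printing Implicit Defensive.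
Import Order.TTheory GRing.Theory Num.Theory.
Import numFieldNormedType.Exports.
Local Open Scope classical_set_scope.
Local Open Scope ring_scope.

Section Defs.
Context {R : realType}.

Definition is_linear_fun (V : normedModType R) (l : V -> R) :=
  (forall x y, l (x + y) = l x + l y) /\ (forall (c : R) x, l (c *: x) = c * l x).

Definition is_linear_map (V W : normedModType R) (f : V -> W) :=
  (forall x y, f (x + y) = f x + f y) /\ (forall (c : R) x, f (c *: x) = c *: f x).

(* ip is an inner product inducing the norm of V (so a complete V is a
   real Hilbert space) *)
Definition is_inner_product (V : normedModType R) (ip : V -> V -> R) :=
  [/\ forall y, is_linear_fun (fun x => ip x y),
      forall x y, ip x y = ip y x &
      forall x, ip x x = `|x| ^+ 2].

Definition is_bounded_bilinear (V : normedModType R) (a : V -> V -> R) :=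
  [/\ forall y, is_linear_fun (fun x => a x y),
      forall x, is_linear_fun (fun y => a x y) &
      exists M : R, forall x y, `|a x y| <= M * `|x| * `|y|].

Definition is_dual_elt (V : normedModType R) (xi : V -> R) :=
  is_linear_fun xi /\ exists M : R, forall v, `|xi v| <= M * `|v|.

Definition weak_cvg (V : normedModType R) (u : nat -> V) (x : V) :=
  forall l : V -> R, is_dual_elt l -> (l \o u) @ \oo --> l x.

Definition convex_efun (V : normedModType R) (phi : V -> \bar R) :=
  forall (t : R) (x y : V), 0 < t < 1 ->
    let z : V := t *: x + (1 - t) *: y in
    (phi z <= t%:E * phi x + (1 - t)%:E * phi y)%E.

Definition effdom (V : normedModType R) (phi : V -> \bar R) : set V :=
  [set v | (phi v < +oo)%E].

Definition dom_subdiff (V : normedModType R) (phi : V -> \bar R) : set V :=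
  [set u | exists xi : V -> R, is_dual_elt xi /\
      forall v, ((xi (v - u))%:E <= phi v - phi u)%E].

End Defs.

(* Main.v *)
Require Import Defs.
From HB Require Import structures.
From mathcomp Require Import all_boot all_order all_algebra.
From mathcomp Require Import all_classical all_reals all_analysis.
From mathcomp Require Import ring lra.
Import Order.TTheory GRing.Theory Num.Theory.
Import numFieldNormedType.Exports.
Local Open Scope classical_set_scope.
Local Open Scope ring_scope.

Section LinFacts.
Context {R : realType} {V : normedModType R} {l : V -> R} (hl : is_linear_fun l).

Lemma lin0 : l 0 = 0.
Proof. by have := hl.2 0 0; rewrite scale0r mul0r. Qed.
Lemma linN x : l (- x) = - l x.
Proof. by rewrite -scaleN1r hl.2 mulN1r. Qed.
Lemma linD x y : l (x + y) = l x + l y.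
Proof. exact: hl.1. Qed.
Lemma linB x y : l (x - y) = l x - l y.
Proof. by rewrite linD linN. Qed.
Lemma linZ c x : l (c *: x) = c * l x.
Proof. exact: hl.2. Qed.
End LinFacts.

Section IP.
Context {R : realType} {V : normedModType R} {ip : V -> V -> R}
  (hip : is_inner_product ip).

Lemma ip_linl y : is_linear_fun (fun x => ip x y).
Proof. by case: hip. Qed.
Lemma ipC x y : ip x y = ip y x.
Proof. by case: hip. Qed.
Lemma ip_linr x : is_linear_fun (fun y => ip x y).
Proof. by split => [y z|c y]; rewrite !(ipC x); [apply: (ip_linl x).1|apply: (ip_linl x).2]. Qed.
Lemma ipxx x : ip x x = `|x| ^+ 2.
Proof. by case: hip. Qed.
Lemma ipDl x y z : ip (x + y) z = ip x z + ip y z.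
Proof. by have := linD (ip_linl z); apply. Qed.
Lemma ipDr x y z : ip z (x + y) = ip z x + ip z y.
Proof. by have := linD (ip_linr z); apply. Qed.
Lemma ipBl x y z : ip (x - y) z = ip x z - ip y z.
Proof. by have := linB (ip_linl z); apply. Qed.
Lemma ipBr x y z : ip z (x - y) = ip z x - ip z y.
Proof. by have := linB (ip_linr z); apply. Qed.
Lemma ipZl c x z : ip (c *: x) z = c * ip x z.
Proof. by have := linZ (ip_linl z); apply. Qed.
Lemma ipZr c x z : ip z (c *: x) = c * ip z x.
Proof. by have := linZ (ip_linr z); apply. Qed.
Lemma ipNl x z : ip (- x) z = - ip x z.
Proof. by have := linN (ip_linl z); apply. Qed.
Lemma ipNr x z : ip z (- x) = - ip z x.
Proof. by have := linN (ip_linr z); apply. Qed.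

Lemma normD2 x y : `|x + y| ^+ 2 = `|x| ^+ 2 + 2 * ip x y + `|y| ^+ 2.
Proof. by rewrite -!ipxx ipDl !ipDr (ipC y x); ring. Qed.
Lemma normB2 x y : `|x - y| ^+ 2 = `|x| ^+ 2 - 2 * ip x y + `|y| ^+ 2.
Proof. by rewrite -!ipxx ipBl !ipBr (ipC y x); ring. Qed.

Lemma ip_le x y : ip x y <= `|x| * `|y|.
Proof.
have h : `|x + y| ^+ 2 <= (`|x| + `|y|) ^+ 2.
  by rewrite lerXn2r ?nnegrE ?addr_ge0 //; exact: ler_normD.
rewrite normD2 in h; nra.
Qed.

Lemma CS x y : `|ip x y| <= `|x| * `|y|.
Proof.
rewrite ler_norml ip_le andbT; have := ip_le x (- y).
by rewrite ipNr normrN; lra.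
Qed.
End IP.
Section RealFacts.
Context {R : realType}.
Lemma natSinv_near (e : R) : 0 < e -> \forall n \near \oo, n.+1%:R^-1 < e.
Proof. by move=> e0; exact: (near_infty_natSinv_lt (PosNum e0)). Qed.

Lemma lim_t (X c : R) : 0 <= c -> (forall t, 0 < t < 1 -> c * (1 - t) <= X) -> c <= X.
Proof.
move=> c0 H; rewrite leNgt; apply/negP => hX.
pose d := c - X; have d0 : 0 < d by rewrite /d subr_gt0.
pose t := d / (d + c + 1).
have ht : t * (d + c + 1) = d by rewrite /t mulfVK // gt_eqF //; lra.
have t0 : 0 < t by rewrite /t divr_gt0 //; lra.
have t1 : t < 1 by nra.
have := H t; rewrite t0 t1 /= => /(_ isT); rewrite /d in ht d0; nra.
Qed.

Lemma sq_le (p q : R) : 0 <= q -> p ^+ 2 <= q ^+ 2 -> p <= q.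
Proof. move=> q0 h; rewrite leNgt; apply/negP => hpq; nra. Qed.
End RealFacts.
Section Prox.
Context {R : realType} {V : completeNormedModType R} (ip : V -> V -> R)
  (hip : is_inner_product ip) (mu : R) (hmu : 0 < mu)
  (l : V -> R) (hl : is_linear_fun l) (K : R) (hK0 : 0 <= K)
  (hK : forall e, `|l e| <= K * `|e|)
  (psi : V -> \bar R) (hninf : forall v, psi v != -oo%E)
  (hprop : exists v, (psi v < +oo)%E) (hconv : convex_efun psi)
  (hlsc : lower_semicontinuous psi) (c1 c2 : R)
  (hlb : forall v, ((- (c1 * `|v| + c2))%:E <= psi v)%E).

Let D v := (psi v < +oo)%E.
Let G v := mu / 2 * `|v| ^+ 2 - l v.
Let Fr v := G v + fine (psi v).

Let finD {v : V} : D v -> psi v = (fine (psi v))%:E.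
Proof. by move=> Dv; rewrite fineK // fin_numE hninf (lt_eqF Dv). Qed.

Let ip_conv (x y : V) (t : R) : `|t *: x + (1 - t) *: y| ^+ 2 =
  t * `|x| ^+ 2 + (1 - t) * `|y| ^+ 2 - t * (1 - t) * `|x - y| ^+ 2.
Proof.
rewrite -!(ipxx hip) !(ipDl hip, ipDr hip, ipBl hip, ipBr hip, ipZl hip, ipZr hip, ipNl hip, ipNr hip).
rewrite (ipC hip y x); ring.
Qed.

Let conv_Fr {x y : V} {t : R} : D x -> D y -> 0 < t < 1 ->
  D (t *: x + (1 - t) *: y) /\
  Fr (t *: x + (1 - t) *: y) <=
    t * Fr x + (1 - t) * Fr y - mu / 2 * (t * (1 - t)) * `|x - y| ^+ 2.
Proof.
move=> Dx Dy ht.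
have /= hc := hconv t x y ht.
rewrite (finD Dx) (finD Dy) -!EFinM -EFinD in hc.
have Dz : D (t *: x + (1 - t) *: y) by apply: (le_lt_trans hc); exact: ltry.
split => //.
rewrite (finD Dz) lee_fin in hc.
rewrite /Fr /G (ip_conv x y t) (linD hl) !(linZ hl).
lra.
Qed.

Let B0 := (K + c1) ^+ 2 / (2 * mu) + c2.

Let Fr_lb (v : V) : D v -> - B0 <= Fr v.
Proof.
move=> Dv; have h1 := hlb v; rewrite (finD Dv) lee_fin in h1.
have h2 : l v <= K * `|v| := le_trans (ler_norm _) (hK v).
have key : mu / 2 * `|v| ^+ 2 - (K + c1) * `|v| + (K + c1) ^+ 2 / (2 * mu) =
   (mu * `|v| - (K + c1)) ^+ 2 / (2 * mu).
  by field; rewrite gt_eqF.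
have : 0 <= (mu * `|v| - (K + c1)) ^+ 2 / (2 * mu).
  by rewrite divr_ge0 ?sqr_ge0 // mulr_ge0 // ltW.
rewrite /Fr /G /B0; lra.
Qed.

Lemma prox : exists z, (psi z < +oo)%E /\
  forall v, (0 <= (mu * ip z (v - z) - l (v - z))%:E + psi v - psi z)%E.
Proof.
pose S := Fr @` D.
have S_inf : has_inf S.
  split; first by case: hprop => v Dv; exists (Fr v); exists v.
  by exists (- B0) => r [v Dv <-]; exact: Fr_lb.
pose m := inf S.
have m_le v : D v -> m <= Fr v.
  by move=> Dv; apply: (ge_inf S_inf.2); exists v.
have /choice [xs hxs] : forall n : nat, exists v, D v /\ Fr v < m + n.+1%:R^-1.
  move=> n; have hn : 0 < n.+1%:R^-1 :> R by rewrite invr_gt0.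
  have [r [v Dv <-] hr] := inf_adherent hn S_inf.
  by exists v.
have est n k : mu / 8 * `|xs n - xs k| ^+ 2 < (n.+1%:R^-1 + k.+1%:R^-1) / 2.
  have [Dn hn] := hxs n; have [Dk hk] := hxs k.
  have ht : 0 < (1 / 2 : R) < 1 by apply/andP; split; lra.
  have [Dz hz] := conv_Fr Dn Dk ht.
  have := m_le _ Dz; move: hn hk hz; move: (n.+1%:R^-1) (k.+1%:R^-1) => a b; lra.
have cxs : cvgn xs.
  apply/cauchy_cvgP/cauchy_ballP => e e0; near_simpl.
  have e2 : 0 < mu * e ^+ 2 / 8 by rewrite divr_gt0 // mulr_gt0 // exprn_gt0.
  near=> n k; rewrite -ball_normE /ball_ /=.
  have hn : n.+1%:R^-1 < mu * e ^+ 2 / 8 by near: n; exact: natSinv_near.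
  have hk : k.+1%:R^-1 < mu * e ^+ 2 / 8 by near: k; exact: natSinv_near.
  have := est n k; move: hn hk; move: (n.+1%:R^-1) (k.+1%:R^-1) => a b hn hk h.
  rewrite ltNge; apply/negP => hle.
  have : e ^+ 2 <= `|xs n - xs k| ^+ 2 by rewrite lerXn2r // ?nnegrE // ltW.
  move/(ler_wpM2l (ltW hmu)); lra.
set u := lim (xs @ \oo).
have cu : xs @ \oo --> u := cxs.
pose C0 := mu * (`|u| + 2) + K.
have C00 : 0 <= C0 by rewrite /C0 addr_ge0 // mulr_ge0 ?ltW // addr_ge0.
have Gclose (x : V) (r : R) : 0 <= r <= 1 -> `|u - x| <= r -> G u - r * C0 <= G x.
  move=> /andP[r0 r1] hr.
  have h1 : `|u| <= `|u - x| + `|x|.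
    by rewrite -[X in `|X| <= _](subrK x u) ler_normD.
  have h2 : `|x| <= `|u - x| + `|u|.
    by rewrite distrC -[X in `|X| <= _](subrK u x) ler_normD.
  have h3 : l x - l u <= K * r.
    rewrite -(linB hl); apply: (le_trans (ler_norm _)).
    by apply: (le_trans (hK _)); rewrite ler_wpM2l // distrC.
  have h4 : `|u| ^+ 2 - `|x| ^+ 2 <= r * (2 * `|u| + 1).
    have hx0 : 0 <= `|x| := normr_ge0 _.
    have hu0 : 0 <= `|u| := normr_ge0 _.
    have p1 : 0 <= (r - (`|u| - `|x|)) * (`|u| + `|x|) by apply: mulr_ge0; lra.
    have p2 : 0 <= r * (`|u| + 1 - `|x|) by apply: mulr_ge0; lra.
    lra.
  have := ler_wpM2l (ltW hmu) h4.
  have : 0 <= mu * r by rewrite mulr_ge0 // ltW.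
  rewrite /G /C0; lra.
have key (eps : R) : 0 < eps -> (psi u <= (m + eps - G u)%:E)%E.
  move=> e0; rewrite leNgt; apply/negP => hlt.
  have [N hN HN] := hlsc _ _ hlt.
  pose r := Num.min 1 (eps / (4 * (C0 + 1))).
  have r0 : 0 < r by rewrite lt_min ltr01 divr_gt0 // mulr_gt0 //; lra.
  have r1 : r <= 1 by rewrite ge_min lexx.
  have r2 : r * (C0 + 1) <= eps / 4.
    have : r <= eps / (4 * (C0 + 1)) by rewrite ge_min lexx orbT.
    move/(ler_wpM2r (ltW (ltr_pwDr ltr01 C00 : 0 < C0 + 1))).
    have -> : eps / (4 * (C0 + 1)) * (C0 + 1) = eps / 4.
      by field; rewrite gt_eqF //; lra.
    by [].
  have e2 : 0 < eps / 2 by rewrite divr_gt0.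
  have : \forall n \near \oo, [/\ N (xs n), `|u - xs n| < r & n.+1%:R^-1 < eps / 2].
    near=> n; split.
    - by near: n; apply: cu.
    - by near: n; move/cvgrPdist_lt : cu; apply.
    - by near: n; exact: natSinv_near.
  case=> n0 _ /(_ n0 (leqnn n0)) [hNn hun hn].
  have := HN _ hNn; have [Dn hFn] := hxs n0.
  rewrite (finD Dn) lte_fin => hp.
  have := Gclose (xs n0) r; rewrite r1 (ltW r0) => /(_ isT (ltW hun)) hG.
  move: hFn hn; rewrite /Fr; move: (n0.+1%:R^-1) => a hFn hn.
  lra.
have Du : D u.
  by apply: (le_lt_trans (key 1 ltr01)); exact: ltry.
have Fu : Fr u <= m.
  apply/ler_addgt0Pr => eps e0; have := key _ e0.
  by rewrite (finD Du) lee_fin /Fr; lra.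
exists u; split => // v.
have [Dv|nDv] := boolP (D v); last first.
  move: nDv; rewrite /D -leNgt leye_eq => /eqP ->.
  by rewrite (finD Du) addey // addye.
rewrite (finD Dv) (finD Du) -EFinD lee_fin.
have ht (t : R) : 0 < t < 1 -> mu / 2 * `|v - u| ^+ 2 * (1 - t) <= Fr v - Fr u.
  move=> ht; have [Dz hz] := conv_Fr Dv Du ht.
  have := m_le _ Dz; move: ht => /andP[t0 t1]; nra.
have c0 : 0 <= mu / 2 * `|v - u| ^+ 2.
  by rewrite mulr_ge0 ?sqr_ge0 // divr_ge0 // ltW.
have := @lim_t R _ _ c0 ht.
have idn : `|v| ^+ 2 = `|u| ^+ 2 + 2 * ip u (v - u) + `|v - u| ^+ 2.
  by rewrite (normB2 hip) (ipBr hip) (ipxx hip u) (ipC hip v u); ring.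
rewrite /Fr /G idn (linB hl); lra.
Unshelve. all: end_near.
Qed.
End Prox.
Section Stamp.
Context {R : realType} {V : completeNormedModType R} {ip : V -> V -> R}
  (hip : is_inner_product ip)
  (c : V -> V -> R) (hc1 : forall y, is_linear_fun (fun x => c x y))
  (hc2 : forall x, is_linear_fun (fun y => c x y))
  (M : R) (hM : forall x y, `|c x y| <= M * `|x| * `|y|)
  (al : R) (hal : 0 < al) (hcoer : forall x, al * `|x| ^+ 2 <= c x x)
  (L : V -> R) (hL : is_linear_fun L) (KL : R) (hKL0 : 0 <= KL)
  (hKL : forall e, `|L e| <= KL * `|e|)
  (psi : V -> \bar R) (hninf : forall v, psi v != -oo%E)
  (hprop : exists v, (psi v < +oo)%E) (hconv : convex_efun psi)
  (hlsc : lower_semicontinuous psi) (c1 c2 : R)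
  (hlb : forall v, ((- (c1 * `|v| + c2))%:E <= psi v)%E).

Let finE {v : V} : (psi v < +oo)%E -> psi v = (fine (psi v))%:E.
Proof. by move=> Dv; rewrite fineK // fin_numE hninf (lt_eqF Dv). Qed.

Lemma stamp : exists u, (psi u < +oo)%E /\
  forall v, (0 <= (c u (v - u) - L (v - u))%:E + psi v - psi u)%E.
Proof.
pose M1 := `|M| + al.
have M1pos : 0 < M1 by rewrite /M1 ltr_wpDl.
have hM1 x y : `|c x y| <= M1 * `|x| * `|y|.
  apply: (le_trans (hM x y)); rewrite -!mulrA ler_wpM2r ?mulr_ge0 //.
  by rewrite /M1 (le_trans (ler_norm M)) // lerDl ltW.
have riesz d : exists r, forall e, ip r e = c d e.
  have hK0 : 0 <= M1 * `|d| by rewrite mulr_ge0 // ltW.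
  have hK e : `|c d e| <= M1 * `|d| * `|e| by exact: hM1.
  have hn0 : forall v : V, (0 : \bar R) != -oo%E by [].
  have hp0 : exists v : V, ((0 : \bar R) < +oo)%E by exists 0; exact: ltry.
  have hc0 : convex_efun (fun _ : V => (0 : \bar R)).
    by move=> t x y _ /=; rewrite !mule0 adde0.
  have hl0 : lower_semicontinuous (fun _ : V => (0 : \bar R)).
    by move=> x a h; exists setT => //; exact: filterT.
  have hb0 : forall v : V, ((- (0 * `|v| + 0))%:E <= (0 : \bar R))%E.
    by move=> v; rewrite mul0r addr0 oppr0.
  have [z [_ hz]] := @prox _ _ ip hip 1 ltr01 _ (hc2 d) _ hK0 hK _ hn0 hp0 hc0 hl0 _ _ hb0.
  exists z => e.
  have h1 := hz (z + e); have h2 := hz (z - e).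
  rewrite (addrC z e) addrK in h1.
  rewrite (addrC z (- e)) addrK in h2.
  rewrite adde0 sube0 lee_fin mul1r in h1.
  rewrite adde0 sube0 lee_fin mul1r (ipNr hip) (linN (hc2 d)) in h2.
  clear hn0 hb0 hz; move: h1 h2; move: (ip z e) (c d e) => A B h1 h2.
  by apply/eqP; rewrite eq_le; apply/andP; split; lra.
have /choice [rr hrr] := riesz.
pose mu := M1 ^+ 2 / al.
have mupos : 0 < mu by rewrite divr_gt0 // exprn_gt0.
have mual : mu * al = M1 ^+ 2 by rewrite /mu mulfVK // gt_eqF.
have alM1 : al <= M1 by rewrite /M1 lerDr.
have muM1 : M1 <= mu.
  rewrite leNgt; apply/negP => h.
  have : mu * al < M1 * al by rewrite ltr_pM2r.
  rewrite mual; nra.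
pose lu (u : V) := fun e => mu * ip u e - c u e + L e.
have lu_lin (u : V) : is_linear_fun (lu u).
  split => [x y|a x]; rewrite /lu.
    by rewrite (ipDr hip) (linD (hc2 u)) (linD hL); ring.
  by rewrite (ipZr hip) (linZ (hc2 u)) (linZ hL); ring.
have lu_K0 (u : V) : 0 <= mu * `|u| + M1 * `|u| + KL.
  by rewrite !addr_ge0 // mulr_ge0 // ltW.
have lu_K (u e : V) : `|lu u e| <= (mu * `|u| + M1 * `|u| + KL) * `|e|.
  rewrite /lu; apply: (le_trans (ler_normD _ _)).
  apply: (le_trans (lerD (ler_normB _ _) (lexx _))).
  rewrite normrM (gtr0_norm mupos).
  have h1 := CS hip u e; have h2 := hM1 u e; have h3 := hKL e.
  have := ler_wpM2l (ltW mupos) h1.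
  move: h1 h2 h3; move: (ip u e) (c u e) (L e) `|ip u e| `|c u e| `|L e| => A B C nA nB nC.
  move=> *; nra.
have /choice [T hT] : forall u, exists z, (psi z < +oo)%E /\ forall v, (0 <= (mu * ip z (v - z) - lu u (v - z))%:E + psi v - psi z)%E.
  by move=> u; exact: (@prox _ _ ip hip mu mupos _ (lu_lin u) _ (lu_K0 u) (lu_K u)
     _ hninf hprop hconv hlsc _ _ hlb).
pose q := (mu ^+ 2 - M1 ^+ 2) / mu ^+ 2.
have q0 : 0 <= q by rewrite /q divr_ge0 ?sqr_ge0 // subr_ge0 lerXn2r // ?nnegrE ltW.
have q1 : q < 1.
  rewrite /q ltr_pdivrMr ?exprn_gt0 // mul1r; rewrite ltrBlDr ltrDl exprn_gt0 //.
have contr (u1 u2 : V) : `|T u1 - T u2| <= Num.sqrt q * `|u1 - u2|.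
  have [D1 h1] := hT u1; have [D2 h2] := hT u2.
  have I1 := h1 (T u2); have I2 := h2 (T u1).
  rewrite (finE D1) (finE D2) -EFinD lee_fin in I1.
  rewrite (finE D1) (finE D2) -EFinD lee_fin in I2.
  move: D1 D2 h1 h2 I1 I2; set z1 := T u1; set z2 := T u2 => D1 D2 h1 h2 I1 I2.
  set e := z1 - z2 in I2 *; set d := u1 - u2.
  have E1 : z2 - z1 = - e by rewrite /e opprB.
  rewrite E1 (ipNr hip) (linN (lu_lin u1)) in I1.
  have Hd : lu u1 e - lu u2 e = mu * ip d e - c d e.
    by rewrite /lu /d (ipBl hip) (linB (hc1 e)); ring.
  have He : ip z1 e - ip z2 e = `|e| ^+ 2 by rewrite -(ipBl hip) (ipxx hip).
  clearbody d e.
  set w := mu *: d - rr d.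
  have Hw : mu * ip d e - c d e = ip w e by rewrite /w (ipBl hip (mu *: d) (rr d) e) (ipZl hip mu d e) hrr.
  have CSw := ip_le hip w e.
  have key1 : mu * `|e| ^+ 2 <= `|w| * `|e|.
    have He2 : mu * (ip z1 e - ip z2 e) = mu * `|e| ^+ 2 by rewrite He.
    move: I1 I2 Hd He2 Hw CSw.
    move: (ip z1 e) (ip z2 e) (lu u1 e) (lu u2 e) (ip d e) (c d e) (ip w e)
      (fine (psi z1)) (fine (psi z2)) (`|e| ^+ 2) (`|w| * `|e|).
    by move=> *; lra.
  have Hw2 : `|w| ^+ 2 = mu ^+ 2 * `|d| ^+ 2 - 2 * mu * ip (rr d) d + `|rr d| ^+ 2.
    rewrite -!(ipxx hip) /w.
    rewrite !(ipBl hip, ipBr hip, ipZl hip, ipZr hip) (ipC hip d (rr d)); ring.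
  have Hrd : al * `|d| ^+ 2 <= ip (rr d) d by rewrite hrr.
  have Hrr : `|rr d| ^+ 2 <= M1 * `|d| * `|rr d|.
    by rewrite -(ipxx hip) hrr (le_trans (ler_norm _)).
  have Hr : `|rr d| <= M1 * `|d|.
    have n0 : 0 <= `|rr d| := normr_ge0 _.
    have n1 : 0 <= M1 * `|d| by rewrite mulr_ge0 // ltW.
    move: Hrr n0 n1; move: `|rr d| (M1 * `|d|) => a b.
    by move=> h n0 n1; nra.
  have Hr2 : `|rr d| ^+ 2 <= M1 ^+ 2 * `|d| ^+ 2.
    by rewrite -exprMn lerXn2r // ?nnegrE // mulr_ge0 // ltW.
  have Hw3 : `|w| ^+ 2 <= (mu ^+ 2 - M1 ^+ 2) * `|d| ^+ 2.
    rewrite Hw2; have := ler_wpM2l (ltW mupos) Hrd.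
    have : mu * (al * `|d| ^+ 2) = M1 ^+ 2 * `|d| ^+ 2 by rewrite mulrA mual.
    move: Hr2 => *; lra.
  have Hmu : mu * `|e| <= `|w|.
    have n0 : 0 <= `|e| := normr_ge0 _.
    have n1 : 0 <= `|w| := normr_ge0 _.
    move: key1 n0 n1; move: `|e| `|w| => a b h n0 n1.
    rewrite leNgt; apply/negP => hlt.
    have a0 : 0 < a by rewrite lt0r; apply/andP; split => //; apply/eqP => a0;
      move: hlt; rewrite a0 mulr0 ltNge n1.
    nra.
  have Hmu2 : mu ^+ 2 * `|e| ^+ 2 <= (mu ^+ 2 - M1 ^+ 2) * `|d| ^+ 2.
    have p0 : 0 <= mu * `|e| by apply: mulr_ge0; [exact: ltW | exact: normr_ge0].
    have h := ler_pM p0 p0 Hmu Hmu.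
    lra.
  have Hq : q * mu ^+ 2 = mu ^+ 2 - M1 ^+ 2.
    by rewrite /q mulfVK // sqrf_eq0 gt_eqF.
  have He2 : `|e| ^+ 2 <= q * `|d| ^+ 2.
    rewrite -(ler_pM2r (exprn_gt0 2 mupos)).
    rewrite [q * _ * _]mulrAC Hq mulrC; exact: Hmu2.
  apply: sq_le; first by rewrite mulr_ge0 ?sqrtr_ge0.
  by rewrite exprMn sqr_sqrtr.
have ctr : is_contraction (totalfun T : {fun [set: V] >-> [set: V]}).
  exists (Num.sqrt q)%:nng; split => /=.
    by rewrite -sqrtr1 ltr_sqrt.
  by move=> [x y] _ /=; exact: contr.
have [p _ hp] := banach_fixed_point ctr closedT (ex_intro _ 0 I).
have hp2 : T p = p by rewrite [RHS]hp.
have [Dp hTp] := hT p; rewrite hp2 in Dp hTp.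
exists p; split => // v; have := hTp v.
by rewrite /lu; congr (_ <= _ + _ - _)%E; congr (_%:E); ring.
Qed.
End Stamp.
Section Misc.
Context {R : realType}.

Lemma ecmp (A B : R) (p q : \bar R) : p != -oo%E -> q \is a fin_num ->
  (0 <= (A - B)%:E + p - q)%E -> (B%:E <= A%:E + p - q)%E.
Proof.
move=> hp hq; rewrite -(fineK hq).
case: p hp => [r| |] //= _; last by move=> _; rewrite addey // addye // leey.
by rewrite -!EFinD !lee_fin; lra.
Qed.

Lemma ecmp2 (A B : R) (p q : \bar R) : p != -oo%E -> q \is a fin_num ->
  (0 <= (A - B)%:E + p - q)%E -> ((B - A)%:E <= p - q)%E.
Proof.
move=> hp hq; rewrite -(fineK hq).
case: p hp => [r| |] //= _; last by move=> _; rewrite addye // leey.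
by rewrite -!EFinD !lee_fin; lra.
Qed.

Lemma lin_bounded (V W : normedModType R) (f : V -> W) :
  is_linear_map f -> continuous f -> exists2 k, 0 <= k & forall x, `|f x| <= k * `|x|.
Proof.
move=> [fD fZ] fc.
have f0 : f 0 = 0 by have := fZ 0 0; rewrite !scale0r.
have := fc 0; move/cvgrPdist_lt => /(_ 1 ltr01).
rewrite f0 => /nbhs_ballP [e e0 he].
exists (2 / e); first by rewrite divr_ge0 // ltW.
move=> x; have [->|x0] := eqVneq x 0; first by rewrite f0 !normr0 mulr0.
have nx : 0 < `|x| by rewrite normr_gt0.
pose k := e / (2 * `|x|).
have k0 : 0 < k by rewrite divr_gt0 // mulr_gt0.
have := he (k *: x); rewrite -ball_normE /ball_ /= sub0r normrN normrZ gtr0_norm //.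
have -> : k * `|x| = e / 2 by rewrite /k invfM mulrA mulfVK ?gt_eqF.
have e2 : e / 2 < e by rewrite ltr_pdivrMr // ltr_pMr // ltr1n.
move=> /(_ e2); rewrite fZ sub0r normrN normrZ gtr0_norm // => h.
have : k * `|f x| * (2 * `|x|) <= 1 * (2 * `|x|) 
  by apply: ler_wpM2r; [rewrite mulr_ge0 // ltW | exact: ltW].
have -> : k * `|f x| * (2 * `|x|) = e * `|f x| by rewrite /k; field; rewrite gt_eqF.
move=> h2; rewrite -(ler_pM2l e0) mulrA mulrCA mulfV ?gt_eqF // mulr1.
lra.
Qed.
End Misc.
Section Core.
Context {R : realType} {V H : completeNormedModType R}
  {ipV : V -> V -> R} {ipH : H -> H -> R}
  (hipV : is_inner_product ipV) (hipH : is_inner_product ipH)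
  {iota : V -> H} (hiota_lin : is_linear_map iota)
  (Ki : R) (hKi0 : 0 <= Ki) (hKi : forall x, `|iota x| <= Ki * `|x|)
  {a : V -> V -> R} {alpha : R}
  (ha : is_bounded_bilinear a) (halpha : 0 < alpha)
  (hcoer : forall u, a u u >= alpha * `|u| ^+ 2)
  {b : V -> V -> V -> R} {CB : R}
  (hb_lin2 : forall u w, is_linear_fun (fun v => b u v w))
  (hb_lin3 : forall u v, is_linear_fun (fun w => b u v w))
  (hCB : forall u v w, `|b u v w| <=
           CB * Num.sqrt (a u u) * Num.sqrt (a v v) * Num.sqrt (a w w))
  {phi : V -> \bar R} {Cphi1 : R}
  (hphi_ninf : forall v, phi v != -oo%E)
  (hphi_proper : exists v, (phi v < +oo)%E)
  (hphi_conv : convex_efun phi)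
  (hphi_lsc : lower_semicontinuous phi)
  (hCphi1 : 0 < Cphi1)
  (hphi_lb : forall v, (phi v >= (- (Cphi1 * (Num.sqrt (a v v) + 1)))%:E)%E)
  {Cq th : R}
  (hCq_young : forall u v, `|b u v v| <=
         Cq * (Num.sqrt (a u u) `^ th) * `|iota v| ^+ 2
         + 4^-1 * Num.sqrt (a v v) ^+ 2)
  (w : V) (f : H) (lambda : R)
  (hlambda : lambda >= Cq * (Num.sqrt (a w w) `^ th)).

Lemma core : exists u : V,
    (forall v : V,
      ((lambda * ipH (iota u) (iota (v - u)) + a u (v - u) + b w u (v - u))%:E
        + phi v - phi u >= (ipH f (iota (v - u)))%:E)%E)
    /\ dom_subdiff phi u.
Proof.
have [hal1 hal2 [Ma hMa]] := ha.
have iD x y : iota (x + y) = iota x + iota y := hiota_lin.1 x y.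
have iZ k x : iota (k *: x) = k *: iota x := hiota_lin.2 k x.
have aD1 x1 x2 y : a (x1 + x2) y = a x1 y + a x2 y := (hal1 y).1 x1 x2.
have aZ1 k x y : a (k *: x) y = k * a x y := (hal1 y).2 k x.
have aD2 x y1 y2 : a x (y1 + y2) = a x y1 + a x y2 := (hal2 x).1 y1 y2.
have aZ2 k x y : a x (k *: y) = k * a x y := (hal2 x).2 k y.
have bD2 x1 x2 y : b w (x1 + x2) y = b w x1 y + b w x2 y := (hb_lin2 w y).1 x1 x2.
have bZ2 k x y : b w (k *: x) y = k * b w x y := (hb_lin2 w y).2 k x.
have bD3 x y1 y2 : b w x (y1 + y2) = b w x y1 + b w x y2 := (hb_lin3 w x).1 y1 y2.
have bZ3 k x y : b w x (k *: y) = k * b w x y := (hb_lin3 w x).2 k y.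
have apos x : 0 <= a x x.
  by apply: le_trans (hcoer x); rewrite mulr_ge0 ?sqr_ge0 // ltW.
have sqa x : Num.sqrt (a x x) ^+ 2 = a x x by rewrite sqr_sqrtr.
pose Sa := Num.sqrt `|Ma|.
have hSa x : Num.sqrt (a x x) <= Sa * `|x|.
  apply: sq_le; first by rewrite mulr_ge0 ?sqrtr_ge0.
  rewrite sqa exprMn sqr_sqrtr //; apply: (le_trans (ler_norm _)).
  apply: (le_trans (hMa x x)); rewrite -mulrA ler_wpM2r ?mulr_ge0 //.
  exact: ler_norm.
pose c x y := lambda * ipH (iota x) (iota y) + a x y + b w x y.
have hc1 y : is_linear_fun (fun x => c x y).
  split => [x1 x2|k x]; rewrite /c.
    by rewrite iD (ipDl hipH) aD1 bD2; ring.
  by rewrite iZ (ipZl hipH) aZ1 bZ2; ring.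
have hc2 x : is_linear_fun (fun y => c x y).
  split => [y1 y2|k y]; rewrite /c.
    by rewrite iD (ipDr hipH) aD2 bD3; ring.
  by rewrite iZ (ipZr hipH) aZ2 bZ3; ring.
pose sw := Num.sqrt (a w w).
pose Mc := `|lambda| * Ki ^+ 2 + `|Ma| + `|CB| * sw * Sa ^+ 2.
have hM x y : `|c x y| <= Mc * `|x| * `|y|.
  have t1 : `|lambda * ipH (iota x) (iota y)| <= `|lambda| * (Ki * `|x| * (Ki * `|y|)).
    rewrite normrM ler_wpM2l //; apply: (le_trans (CS hipH _ _)).
    by apply: ler_pM => //; exact: hKi.
  have t2 : `|a x y| <= `|Ma| * `|x| * `|y|.
    apply: (le_trans (hMa x y)); rewrite -!mulrA ler_wpM2r ?mulr_ge0 //.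
    exact: ler_norm.
  have t3 : `|b w x y| <= `|CB| * sw * (Sa * `|x|) * (Sa * `|y|).
    apply: (le_trans (hCB w x y)); rewrite -/sw.
    apply: (le_trans (_ : _ <= `|CB| * sw * Num.sqrt (a x x) * Num.sqrt (a y y))).
      by rewrite -!mulrA ler_wpM2r ?mulr_ge0 ?sqrtr_ge0 // ler_norm.
    apply: ler_pM; [by rewrite !mulr_ge0 ?sqrtr_ge0 | exact: sqrtr_ge0 | | exact: hSa].
    apply: ler_pM; [by rewrite !mulr_ge0 ?sqrtr_ge0 | exact: sqrtr_ge0 | by [] | exact: hSa].
  rewrite /c; apply: (le_trans (ler_normD _ _)).
  apply: (le_trans (lerD (ler_normD _ _) (lexx _))).
  rewrite /Mc; lra.
have hcoerc x : 3 / 4 * alpha * `|x| ^+ 2 <= c x x.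
  have y1 := hCq_young w x; rewrite sqa -/sw in y1.
  have y2 : 0 <= (lambda - Cq * (sw `^ th)) * `|iota x| ^+ 2.
    by rewrite mulr_ge0 ?sqr_ge0 // subr_ge0.
  have y3 := hcoer x.
  have y4 : - `|b w x x| <= b w x x by rewrite lerNl -normrN ler_norm.
  rewrite /c (ipxx hipH); lra.
have hal : 0 < 3 / 4 * alpha by rewrite mulr_gt0.
pose L e := ipH f (iota e).
have hL : is_linear_fun L.
  split => [x y|k x]; rewrite /L; first by rewrite iD (ipDr hipH).
  by rewrite iZ (ipZr hipH).
have hKL0 : 0 <= `|f| * Ki by rewrite mulr_ge0.
have hKL e : `|L e| <= `|f| * Ki * `|e|.
  apply: (le_trans (CS hipH _ _)); rewrite -mulrA ler_wpM2l //.
have hlb v : ((- (Cphi1 * Sa * `|v| + Cphi1))%:E <= phi v)%E.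
  apply: le_trans (hphi_lb v); rewrite lee_fin.
  have := ler_wpM2l (ltW hCphi1) (hSa v); lra.
have [u [Du hVI]] := @stamp _ _ _ hipV c hc1 hc2 _ hM _ hal hcoerc L hL _ hKL0 hKL
  phi hphi_ninf hphi_proper hphi_conv hphi_lsc _ _ hlb.
have fu : phi u \is a fin_num by rewrite fin_numE hphi_ninf (lt_eqF Du).
exists u; split.
  by move=> v; apply: ecmp => //; exact: hVI.
exists (fun e => L e - c u e); split.
  split; first split => [x y|k x] /=.
    by rewrite (linD hL) (linD (hc2 u)); ring.
  by rewrite (linZ hL) (linZ (hc2 u)); ring.
  exists (`|f| * Ki + Mc * `|u|) => e.
  apply: (le_trans (ler_normB _ _)).
  have := hKL e; have := hM u e; lra.
by move=> v; apply: ecmp2 => //; exact: hVI.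
Qed.
End Core.

Theorem mainTheorem3
  (R : realType)
  (* Gelfand triple V ⊂ H ⊂ V' : V, H real Hilbert spaces *)
  (V H : completeNormedModType R)
  (ipV : V -> V -> R) (ipH : H -> H -> R)
  (hipV : is_inner_product ipV) (hipH : is_inner_product ipH)
  (* the embedding V -> H: linear, injective, continuous, dense, compact *)
  (iota : V -> H)
  (hiota_lin : is_linear_map iota)
  (hiota_inj : injective iota)
  (hiota_cont : continuous iota)
  (hiota_dense : closure (range iota) = setT)
  (hiota_cpt : forall M : R, compact (closure (iota @` [set x : V | `|x| <= M])))
  (* bounded coercive bilinear form a; the norm of V is sqrt (a u u) *)
  (a : V -> V -> R) (alpha : R)
  (ha : is_bounded_bilinear a) (halpha : 0 < alpha)
  (hcoer : forall u, a u u >= alpha * `|u| ^+ 2)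
  (* B : V x V -> V', encoded by b u v w = <B(u,v), w> *)
  (b : V -> V -> V -> R) (CB : R)
  (hb_lin1 : forall v w, is_linear_fun (fun u => b u v w))
  (hb_lin2 : forall u w, is_linear_fun (fun v => b u v w))
  (hb_lin3 : forall u v, is_linear_fun (fun w => b u v w))
  (hCB : forall u v w, `|b u v w| <=
           CB * Num.sqrt (a u u) * Num.sqrt (a v v) * Num.sqrt (a w w))
  (* phi : V -> (-oo, +oo] convex, proper, lsc, with linear lower bound *)
  (phi : V -> \bar R) (Cphi1 : R)
  (hphi_ninf : forall v, phi v != -oo%E)
  (hphi_proper : exists v, (phi v < +oo)%E)
  (hphi_conv : convex_efun phi)
  (hphi_lsc : lower_semicontinuous phi)
  (hCphi1 : 0 < Cphi1)
  (hphi_lb : forall v, (phi v >= (- (Cphi1 * (Num.sqrt (a v v) + 1)))%:E)%E)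
  (* (H1) *)
  (C beta1 : R) (hC : 0 < C) (hbeta1 : 0 < beta1 <= 1)
  (H1 : forall u v, `|b u v v| <=
         C * Num.sqrt (a u u) * Num.sqrt (a v v)
           * (`|iota v| `^ beta1) * (Num.sqrt (a v v) `^ (1 - beta1)))
  (* the constant C_{theta1, 1/4} from Young's inequality, theta1 = 2/beta1 *)
  (Cq : R) (hCq : 0 < Cq)
  (hCq_young : forall u v, `|b u v v| <=
         Cq * (Num.sqrt (a u u) `^ (2 / beta1)) * `|iota v| ^+ 2
         + 4^-1 * Num.sqrt (a v v) ^+ 2)
  (* (H2) *)
  (H2 : forall (u : V) (vj wj : nat -> V) (v w : V),
         weak_cvg vj v -> weak_cvg wj w ->
         (fun j => b u (vj j) (wj j)) @ \oo --> b u v w)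
  (w : V) (f : H) (lambda : R)
  (hlambda : lambda >= Cq * (Num.sqrt (a w w) `^ (2 / beta1))) :
  exists u : V,
    (forall v : V,
      ((lambda * ipH (iota u) (iota (v - u)) + a u (v - u) + b w u (v - u))%:E
        + phi v - phi u >= (ipH f (iota (v - u)))%:E)%E)
    /\ dom_subdiff phi u.
Proof.
Proof.
have [Ki hKi0 hKi] := @lin_bounded _ _ _ _ hiota_lin hiota_cont.
exact: (core hipV hipH hiota_lin Ki hKi0 hKi ha halpha hcoer hb_lin2 hb_lin3 hCB
  hphi_ninf hphi_proper hphi_conv hphi_lsc hCphi1 hphi_lb hCq_young w f lambda hlambda).
Qed.
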